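(* For $p$ an odd prime, $H(p-1)\equiv (-1)^{\frac{p-1}{2}}\,(p-1)!! \pmod p$.
   Context: For a natural number $n$, the double factorial $n!!$ is the product of the natural numbers less than or equal to $n$ that have the same parity as $n$. The hyperfactorial is $H(n)=\prod_{k=1}^{n} k^k$. *)

(* Defs.v *)
From mathcomp Require Import all_boot all_order all_algebra.
Set Implicit Arguments. Unset Strict Implicit. Unset Printing Implicit Defensive.

Fixpoint dfact (n : nat) : nat :=
  match n with
  | 0 => 1
  | 1 => 1
  | (m.+2) as k => k * dfact m
  end.

Definition hyperfact (n : nat) : nat := \prod_(1 <= k < n.+1) k ^ k.

(* Main.v *)
Require Import Defs.
From mathcomp Require Import all_boot all_order all_algebra all_field.
From mathcomp Require Import zify.
Import GRing.Theory Num.Theory.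
Local Open Scope ring_scope.

Lemma prod_pairs (R : comPzRingType) (g : nat -> R) (m : nat) :
  \prod_(1 <= k < m.*2.+1) g k = \prod_(0 <= j < m) (g j.*2.+1 * g j.*2.+2).
Proof.
elim: m => [|m IH]; first by rewrite !big_geq.
rewrite doubleS big_nat_recr //= big_nat_recr //= IH big_nat_recr //=.
by rewrite mulrA.
Qed.

Lemma dfact_prod (m : nat) : dfact m.*2 = (\prod_(0 <= j < m) j.*2.+2)%N.
Proof.
elim: m => [|m IH]; first by rewrite big_geq.
by rewrite doubleS /= IH big_nat_recr //= mulnC.
Qed.

Lemma pair_val (p : nat) (hp : prime p) (a b : nat) :
  (a + b)%N = p -> odd a ->
  ((a%:R : 'F_p) ^+ a * (b%:R) ^+ b = - b%:R).
Proof.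
move=> hab oa; subst p.
have ha : (a%:R : 'F_(a + b)) = - b%:R.
  apply/eqP; rewrite -addr_eq0 -natrD.
  by rewrite (pchar_Fp_0 hp).
rewrite ha exprNn -signr_odd oa expr1 mulN1r mulNr -exprD.
by have := expf_card (b%:R : 'F_(a+b)); rewrite card_Fp // => ->.
Qed.

Lemma prod_rev_pair (R : comPzRingType) (g : nat -> R) (m : nat) :
  \prod_(0 <= j < m) (g j.*2.+1 * g j.*2.+2) =
  \prod_(0 <= j < m) (g (m - j.+1).*2.+1 * g j.*2.+2).
Proof. by rewrite big_split [in RHS]big_split /= big_nat_rev /= add0n. Qed.

Lemma key (m : nat) (hp : prime m.*2.+1) :
  ((hyperfact m.*2)%:R : 'F_(m.*2.+1)) = (-1) ^+ m * (dfact m.*2)%:R.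
Proof.
rewrite /hyperfact natr_prod prod_pairs (@prod_rev_pair _ (fun k => ((k ^ k)%N%:R : 'F_(m.*2.+1)))) /=.
rewrite dfact_prod natr_prod.
transitivity (\prod_(0 <= j < m) ((-1 : 'F_(m.*2.+1)) * (j.*2.+2)%:R)); last by rewrite big_split /= prodr_const_nat subn0.
apply: eq_big_nat => j /andP [_ hj].
rewrite !natrX (@pair_val _ hp) ?mulN1r //.
  rewrite -!muln2; lia.
by rewrite /= odd_double.
Qed.

Theorem theorem11 (p : nat) (hp : prime p) (hodd : odd p) :
  ((hyperfact p.-1)%:Z = (-1) ^+ (p.-1)./2 * (dfact p.-1)%:Z %[mod p%:Z])%Z.
Proof.
have hpe : p = (p./2).*2.+1 by rewrite -[LHS]odd_double_half hodd.
have hm : (p.-1)./2 = p./2 by rewrite {1}hpe /= doubleK.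
have hp1 : p.-1 = (p./2).*2 by rewrite {1}hpe.
rewrite hm hp1.
set m := p./2 in hpe *; clearbody m; subst p.
apply/eqP; rewrite eqz_mod_dvd (dvdz_pcharf (pchar_Fp hp)).
rewrite rmorphB rmorphM /= rmorph_sign.
rewrite subr_eq0; apply/eqP; exact: key.
Qed.
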